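(* Let $\mathbf L=\{L_1,\dots,L_n\}$ be a finite multiset of positive rationals, $k\in\mathbb N_{>0}$, $I\subseteq[1..n]$, and $f_l,f_u:I\to\mathbb N_{>0}$ such that (i) for every $i\in I$: $f_l(i)=1$ or $L_i/(f_l(i)-1)$ is infeasible; (ii) for every $i\in I$: $L_i/f_u(i)$ is feasible; (iii) for every $i'\in[1..n]\setminus I$: $L_{i'}$ is feasible but $L_{i'}\neq l^\star$. Then $l^\star\in\mathcal C(I,f_l,f_u)$.
   Context: For $l\in\mathbb Q_{>0}$: $m(l)=\sum_{i=1}^n\lfloor L_i/l\rfloor$, $c(l)=\sum_{i=1}^n(\lceil L_i/l\rceil-1)$; $l$ is feasible if $m(l)\ge k$. The optimal cut length $l^\star$ is the feasible length minimizing $c$ among feasible lengths (it exists, is unique, and equals the largest feasible length). For $I\subseteq[1..n]$ and $f_l:I\to\mathbb N$, $f_u:I\to\mathbb N\cup\{\infty\}$, the candidate multiset is $\mathcal C(I,f_l,f_u)=\biguplus_{i\in I}\{L_i/j : j\in\mathbb N,\ f_l(i)\le j\le f_u(i)\}$, where each pair $(i,j)$ contributes one occurrence. A triple $(I,f_l,f_u)$ satisfying (i)–(iii) is called an admissible restriction. *)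

(* Defs.v *)
From HB Require Import structures.
From mathcomp Require Import all_boot all_order all_algebra.
Set Implicit Arguments. Unset Strict Implicit. Unset Printing Implicit Defensive.
Import Order.TTheory GRing.Theory Num.Theory.
Local Open Scope ring_scope.

(* The multiset L = {L_1..L_n} is given as a family L : 'I_n -> rat. *)

Definition mcount (n : nat) (L : 'I_n -> rat) (l : rat) : int :=
  \sum_(i < n) Num.floor (L i / l).

Definition ccost (n : nat) (L : 'I_n -> rat) (l : rat) : int :=
  \sum_(i < n) (Num.ceil (L i / l) - 1).

Definition feasible (n : nat) (L : 'I_n -> rat) (k : nat) (l : rat) : Prop :=
  0 < l /\ (k%:Z <= mcount L l).

Definition optimal_cut (n : nat) (L : 'I_n -> rat) (k : nat) (l : rat) : Prop :=
  feasible L k l /\ forall l', feasible L k l' -> ccost L l <= ccost L l'.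

Definition in_candidates (n : nat) (L : 'I_n -> rat) (I : {set 'I_n})
    (fl fu : 'I_n -> nat) (x : rat) : Prop :=
  exists2 i, i \in I &
    exists j : nat, [/\ (fl i <= j)%N, (j <= fu i)%N & x = L i / j%:R].

(* Main.v *)
Require Import Defs.
From HB Require Import structures.
From mathcomp Require Import all_boot all_order all_algebra.
From mathcomp Require Import zify.
Import Order.TTheory GRing.Theory Num.Theory.
Local Open Scope ring_scope.

Lemma divLle (x a b : rat) : 0 < x -> 0 < a -> 0 < b -> (x / a <= x / b) = (b <= a).
Proof. by move=> hx ha hb; rewrite ler_pM2l // lef_pV2 ?posrE. Qed.
Lemma divLlt (x a b : rat) : 0 < x -> 0 < a -> 0 < b -> (x / a < x / b) = (b < a).
Proof. by move=> hx ha hb; rewrite ltr_pM2l // ltf_pV2 ?posrE. Qed.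

Lemma feas_down n (L : 'I_n -> rat) k l l' : (forall i, 0 < L i) ->
  0 < l -> l <= l' -> feasible L k l' -> feasible L k l.
Proof.
move=> hL hl hll' [hl' hk]; split => //; apply: (le_trans hk).
apply: ler_sum => i _; apply: le_floor.
by rewrite divLle.
Qed.

Lemma breakpoint n (L : 'I_n -> rat) k l : (forall i, 0 < L i) -> (0 < k)%N ->
  feasible L k l -> exists i (j : nat), [/\ (0 < j)%N, l <= L i / j%:R &
     feasible L k (L i / j%:R)].
Proof.
move=> hL hk [hl hm].
pose P := fun i => 0 < Num.floor (L i / l).
have [i0 Pi0] : exists i0, P i0.
  apply/existsP; apply: contraT; rewrite negb_exists => /forallP H.
  have : mcount L l <= 0.
    rewrite /mcount; apply: (big_ind (fun x => x <= 0)) => //.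
      by move=> x y hx hy; rewrite -[0]addr0 lerD.
    move=> i _.
    by move: (H i); rewrite /P -leNgt.
  move=> h; have := le_trans hm h; rewrite lez_nat leqn0 => /eqP k0; by rewrite k0 in hk.
pose F := fun i => L i / (Num.floor (L i / l))%:~R.
case: (@arg_minP _ _ _ i0 P F Pi0) => i Pi Hmin.
have jpos : 0 <= Num.floor (L i / l) by apply: ltW.
exists i, `|Num.floor (L i / l)|%N.
have ej : (`|Num.floor (L i / l)|%N%:R : rat) = (Num.floor (L i / l))%:~R.
  by rewrite -[in RHS](gez0_abs jpos).
rewrite ej; split.
- by rewrite -ltz_nat gez0_abs.
- rewrite ler_pdivlMr; last by rewrite ltr0z.
  by rewrite mulrC -ler_pdivlMr // floor_le.
- have Fpos : 0 < F i by rewrite /F divr_gt0 // ltr0z.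
  split => //; apply: (le_trans hm); apply: ler_sum => a _.
  case Pa: (P a).
  + rewrite floor_ge_int -/(F i).
    have fa : 0 < (Num.floor (L a / l))%:~R :> rat by rewrite ltr0z.
    rewrite ler_pdivlMr //.
    apply: (@le_trans _ _ ((Num.floor (L a / l))%:~R * F a)).
      by rewrite ler_pM2l //; apply: Hmin.
    by rewrite /F mulrC divfK ?gt_eqF.
  + apply: (@le_trans _ _ 0); first by rewrite leNgt; move: Pa; rewrite /P => ->.
    by rewrite floor_ge0 divr_ge0 // ltW.
Qed.

Arguments breakpoint {n L k l}.
Arguments feas_down {n L k l l'}.

Lemma strict_c n (L : 'I_n -> rat) (lstar : rat) (a : 'I_n) (j : nat) :
  (forall i, 0 < L i) -> 0 < lstar -> (0 < j)%N -> lstar < L a / j%:R ->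
  ccost L (L a / j%:R) < ccost L lstar.
Proof.
move=> hL hl hj hlt.
have jp : 0 < j%:R :> rat by rewrite ltr0n.
rewrite /ccost (bigD1 a) //= [X in _ < X](bigD1 a) //=.
apply: ltr_leD.
- have -> : L a / (L a / j%:R) = (j%:Z)%:~R by rewrite invf_div mulrCA divff ?mulr1 ?gt_eqF.
  rewrite intrKceil ltrD2r ltNge ceil_le_int -ltNge.
  rewrite ltr_pdivlMr // -[(j%:Z)%:~R]/(j%:R : rat) mulrC -ltr_pdivlMr //.
- apply: ler_sum => i _; rewrite lerD2r; apply: le_ceil.
  by rewrite divLle ?divr_gt0 // ltW.
Qed.

Arguments strict_c {n L lstar a j}.

Theorem mainTheorem5 (n : nat) (L : 'I_n -> rat) (k : nat)
    (I : {set 'I_n}) (fl fu : 'I_n -> nat) (lstar : rat) :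
  (forall i, 0 < L i) ->
  (0 < k)%N ->
  (forall i, i \in I -> (0 < fl i)%N /\ (0 < fu i)%N) ->
  optimal_cut L k lstar ->
  (forall i, i \in I -> fl i = 1%N \/ ~ feasible L k (L i / (fl i - 1)%:R)) ->
  (forall i, i \in I -> feasible L k (L i / (fu i)%:R)) ->
  (forall i, i \notin I -> feasible L k (L i) /\ L i <> lstar) ->
  in_candidates L I fl fu lstar.
Proof.
move=> hL hk hf [hfs hopt] hfl hfu hout.
have hl : 0 < lstar by case: hfs.
have maxl : forall l, feasible L k l -> l <= lstar.
  move=> l hfe; case: (breakpoint hL hk hfe) => a [j [hj hle hf2]].
  rewrite leNgt; apply/negP => hlt.
  have := strict_c hL hl hj (lt_le_trans hlt hle).
  by rewrite ltNge hopt.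
case: (breakpoint hL hk hfs) => i [j [hj hle hf2]].
have eq : lstar = L i / j%:R by apply/eqP; rewrite eq_le hle maxl.
have jp : 0 < j%:R :> rat by rewrite ltr0n.
case iI: (i \in I); last first.
  have [hfi hne] := hout i (negbT iI).
  exfalso; apply: hne; apply/eqP; rewrite eq_le maxl // eq.
  by rewrite /= ler_pdivrMr // -[X in X <= _]mulr1 ler_pM2l // ler1n.
exists i => //; exists j; split => //.
- case: (hfl i iI) => [-> // | hnf].
  rewrite leqNgt; apply/negP => hlt; apply: hnf.
  have fl1 : (0 < fl i - 1)%N by rewrite subn_gt0 (leq_ltn_trans hj hlt).
  apply: (feas_down hL _ _ hfs); first by rewrite divr_gt0 // ltr0n.
  rewrite eq divLle ?ltr0n // ler_nat.
  lia.
- have := maxl _ (hfu i iI); rewrite eq divLle ?ltr0n ?ler_nat //.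
  by case: (hf i iI).
Qed.
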